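(* Let $n\ge 1$ and let $\mathbf F$ be a family of subsets of $[n]$ such that $f(\mathbf F)\neq 0$, where $f(\mathbf F)=\sum_{\mathcal G} (-1)^{|\mathcal G|+1}$, the sum running over all nonempty subfamilies $\mathcal G\subseteq\mathbf F$ with $\bigcup_{G\in\mathcal G}G=[n]$. Then $\max\{r(\mathbf F),t(\mathbf F)\}\ge\sqrt n$.
   Context: $[n]=\{1,\dots,n\}$. The rank $r(\mathbf F)$ is the largest cardinality of a member of $\mathbf F$. $t(\mathbf F)$ is the largest $t$ for which there exist $F_1,\dots,F_t\in\mathbf F$ and elements $x_1,\dots,x_t$ with $x_i\in F_j$ iff $i=j$ (for all $1\le i,j\le t$). *)

(* Defs.v *)
From mathcomp Require Import all_boot all_order all_algebra.
Set Implicit Arguments. Unset Strict Implicit. Unset Printing Implicit Defensive.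
Import GRing.Theory.

Definition fF (n : nat) (F : {set {set 'I_n}}) : int :=
  (\sum_(G in powerset F | (G != set0) && (\bigcup_(X in G) X == [set: 'I_n]))
      (-1) ^+ (#|G|).+1)%R.

(* rank: largest cardinality of a member of F (0 if F is empty) *)
Definition rank (n : nat) (F : {set {set 'I_n}}) : nat :=
  \max_(X in F) #|X|.

Definition tpred (n : nat) (F : {set {set 'I_n}}) (t : nat) : bool :=
  [exists Fs : {ffun 'I_t -> {set 'I_n}}, exists xs : {ffun 'I_t -> 'I_n},
     [forall i, Fs i \in F] &&
     [forall i, forall j, (xs i \in Fs j) == (i == j)]].

(* t(F): largest such t (any such t is <= n since the x_i are distinct) *)
Definition tF (n : nat) (F : {set {set 'I_n}}) : nat :=
  \max_(t < n.+1 | tpred F t) t.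

(* Main.v *)
Require Import Defs.
From mathcomp Require Import all_boot all_order all_algebra.

Lemma card_bigcup_leq (n : nat) (G : {set {set 'I_n}}) :
  #|\bigcup_(X in G) X| <= \sum_(X in G) #|X|.
Proof.
apply: (big_ind2 (fun (S : {set 'I_n}) m => #|S| <= m)).
- by rewrite cards0.
- move=> a b c d H1 H2; apply: leq_trans (leq_card_setU a c) _.
  exact: leq_add.
- by [].
Qed.

(* max(r(F), t(F)) >= sqrt n, stated equivalently over nat as n <= max^2 *)
Theorem lemma3p3 (n : nat) (F : {set {set 'I_n}}) :
  1 <= n -> fF F <> 0%R -> n <= (maxn (rank F) (tF F)) ^ 2.
Proof.
move=> n1 hf.
pose P := fun G : {set {set 'I_n}} =>
  (G \subset F) && (\bigcup_(X in G) X == [set: 'I_n]).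
have [G0 PG0] : exists G0, P G0.
  case: (pickP (fun G => (G \in powerset F) && ((G != set0) &&
      (\bigcup_(X in G) X == [set: 'I_n])))) => [G /and3P [h1 _ h3] | h].
    by exists G; rewrite /P -powersetE h1 h3.
  by exfalso; apply: hf; rewrite /fF big_pred0.
have [G /minsetP [/andP [GF Gcov] Gmin] _] := minset_exists (P := P) PG0.
set k := #|G|.
have priv : forall X, X \in G -> exists x, (x \in X) &&
    [forall Y in G, (x \in Y) ==> (Y == X)].
  move=> X XG.
  have : ~~ P (G :\ X).
    apply/negP => PGX.
    have := Gmin _ PGX (subD1set G X) => /setP /(_ X).
    by rewrite !inE eqxx XG.
  rewrite /P (subset_trans (subD1set G X) GF) /= => /eqP ncov.
  have [x hx] : exists x, x \notin \bigcup_(Y in G :\ X) Y.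
    apply/existsP; rewrite -negb_forall; apply/negP => /forallP hall.
    by apply: ncov; apply/setP => x; rewrite inE hall.
  have : x \in \bigcup_(Y in G) Y by rewrite (eqP Gcov) inE.
  case/bigcupP => Z ZG xZ.
  exists x; apply/andP; split.
    case: (eqVneq Z X) => [<- //| ZX].
    by move/bigcupP: hx; case; exists Z; rewrite // !inE ZX.
  apply/forall_inP => Y YG; apply/implyP => xY; apply/eqP.
  case: (eqVneq Y X) => // YX.
  by move/bigcupP: hx; case; exists Y; rewrite // !inE YX.
have [xs hxs] := fin_all_exists (fun i : 'I_k => priv _ (enum_valP i)).
have tp : tpred F k.
  apply/existsP; exists [ffun i => enum_val i]; apply/existsP.
  exists [ffun i => xs i]; apply/andP; split.
    by apply/forallP => i; rewrite ffunE (subsetP GF) // enum_valP.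
  apply/forallP => i; apply/forallP => j; rewrite !ffunE.
  have /andP [h1 /forall_inP h2] := hxs i.
  apply/eqP; apply/idP/idP.
    move/(implyP (h2 _ (enum_valP j)))/eqP => e.
    by apply/eqP; apply: enum_val_inj.
  by move/eqP => <-.
have kn : k <= n.
  have inj : injective xs.
    move=> i j e.
    have /andP [h1 _] := hxs j.
    have /andP [_ /forall_inP h2] := hxs i.
    have := implyP (h2 _ (enum_valP j)); rewrite e => /(_ h1) /eqP.
    by move/enum_val_inj.
  by have := leq_card _ inj; rewrite !card_ord.
have kt : k <= tF F.
  have := @leq_bigmax_cond _ (fun t : 'I_n.+1 => tpred F t)
      (fun t : 'I_n.+1 => nat_of_ord t) (Ordinal (kn : k < n.+1)) tp.
  by [].
have nkr : n <= k * rank F.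
  apply: (@leq_trans #|\bigcup_(X in G) X|); first by rewrite (eqP Gcov) cardsT card_ord.
  apply: (leq_trans (@card_bigcup_leq n G)).
  rewrite -sum_nat_const; apply: leq_sum => X XG.
  rewrite /rank; apply: (@leq_bigmax_cond _ (fun X => X \in F) (fun X : {set 'I_n} => #|X|)); exact: (subsetP GF _ XG).
apply: leq_trans nkr _; rewrite expnS expn1 mulnC.
apply: leq_mul; [exact: leq_maxl | exact: leq_trans kt (leq_maxr _ _)].
Qed.
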